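(* Let $n$ and $N$ be non-negative integers with $N\le 2n-3$. Suppose $f_0,f_1,\dots,f_N$ is a sequence of positive integers such that (1) $f_0=2$, (2) $f_i=f_{i-1}\pm1$ for $1\le i\le N$, and (3) $f_i\le 2n-i-2$ for $0\le i\le N$. Then there exists a fully heterochronous ranked tree shape with $n$ leaves whose $\mathbf{F}$-matrix $F$ satisfies $F_{i,i}=f_i$ for all $0\le i\le N$.
   Context: A fully heterochronous ranked tree shape with $n$ leaves is a rooted full binary tree (every node has out-degree $0$ or $2$), without leaf labels, with $n$ leaves, together with a total ordering of all $2n-1$ nodes (leaves included) such that nodes appear in increasing order along every path from the root to a leaf; the position of a node in this order, numbered $0,1,\dots,2n-2$, is its rank (the root has rank $0$). Its $\mathbf{F}$-matrix is the $(2n-2)\times(2n-2)$ lower triangular matrix $F$, with indices running from $0$ to $2n-3$, where for $0\le j\le i$ the entry $F_{i,j}$ is the number of edges from a parent node $v$ to a child node $w$ such that the rank of $v$ is at most $j$ and the rank of $w$ is larger than $i$. *)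

(* Defs.v *)
From mathcomp Require Import all_boot.
Set Implicit Arguments. Unset Strict Implicit. Unset Printing Implicit Defensive.

(* A fully heterochronous ranked tree shape with n leaves is encoded by
   identifying each of its 2n-1 nodes with its rank 0..2n-2 and giving the
   parent function [par] : the parent of node v (1 <= v <= 2n-2) is [par v].
   (The value [par 0] is irrelevant.)  Since nodes are identified with their
   ranks, this encodes exactly a rooted tree together with a total order of
   its nodes, up to rank-preserving isomorphism (no leaf labels). *)

Definition nchildren (n : nat) (par : nat -> nat) (u : nat) : nat :=
  count (fun w => par w == u) (iota 1 (2 * n - 2)).

Definition is_FH_ranked_tree_shape (n : nat) (par : nat -> nat) : Prop :=
  [/\ 0 < n,
      (forall v, 0 < v < 2 * n - 1 -> par v < v),
      (forall u, u < 2 * n - 1 ->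
         nchildren n par u = 0 \/ nchildren n par u = 2)
    &
      count (fun u => nchildren n par u == 0) (iota 0 (2 * n - 1)) = n].

Definition Fmat (n : nat) (par : nat -> nat) (i j : nat) : nat :=
  count (fun w => (par w <= j) && (i < w)) (iota 1 (2 * n - 2)).

(* Main.v *)
Require Import Defs.
From mathcomp Require Import all_boot zify.

Section Gen.
Variable b : nat -> bool.
Definition CC m := count b (iota 0 m).

Lemma CC_S m : CC m.+1 = CC m + b m.
Proof. by rewrite /CC -addn1 iotaD count_cat /= addn0. Qed.

Lemma CC_mono m m' : m <= m' -> CC m <= CC m'.
Proof. move=> h; rewrite /CC -(subnKC h) iotaD count_cat; lia. Qed.
Arguments CC_mono {m m'}.

Definition parK K w := count (fun u => 2 * CC u.+1 < w) (iota 0 K).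

Lemma par_le K w i : i < K -> (parK K w <= i) = (w <= 2 * CC i.+1).
Proof.
move=> iK; case: (leqP w (2 * CC i.+1)) => h.
- rewrite /parK -(subnKC (ltnW iK)) iotaD count_cat.
  have -> : count (fun u => 2 * CC u.+1 < w) (iota (0 + i) (K - i)) = 0.
    apply/eqP; rewrite -leqn0 leqNgt -has_count; apply/hasPn => u.
    rewrite mem_iota add0n => /andP[hu _].
    rewrite -ltnS in hu; have := CC_mono hu. lia.
  have := count_size (fun u => 2 * CC u.+1 < w) (iota 0 i); rewrite size_iota; lia.
- apply/negbTE; rewrite -ltnNge /parK -(subnKC iK) iotaD count_cat.
  have : count (fun u => 2 * CC u.+1 < w) (iota 0 i.+1) = i.+1.
    have := all_count (fun u => 2 * CC u.+1 < w) (iota 0 i.+1).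
    rewrite size_iota => e; apply/eqP; rewrite -e; apply/allP => u; rewrite mem_iota add0n => /andP[_ hu].
    have := CC_mono hu; lia.
  lia.
Qed.

Lemma L2 a i s M : i <= a ->
  count (fun w => (w <= a) && (i < w)) (iota s M) = minn (a.+1 - s) M - minn (i.+1 - s) M.
Proof.
move=> ia; elim: M s => [|M IH] s /=; first lia.
rewrite IH. case: (leqP s a); case: (ltnP i s); lia.
Qed.

Variable n : nat.
Hypothesis n0 : 0 < n.
Hypothesis H1 : forall w, 1 <= w <= 2 * n - 2 -> w <= 2 * CC w.
Hypothesis H3 : CC (2 * n - 1) = n.-1.

Definition par := parK (2 * n - 1).

Lemma CC_bound u : u < 2 * n - 1 -> 2 * CC u.+1 <= 2 * n - 2.
Proof. move=> h; have := CC_mono h; lia. Qed.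

Lemma Fmat_par i : i < 2 * n - 1 -> Fmat n par i i = 2 * CC i.+1 - i.
Proof.
move=> iK; rewrite /Fmat.
rewrite (eq_in_count (a2 := fun w => (w <= 2 * CC i.+1) && (i < w))); last first.
  by move=> w _ /=; rewrite /par par_le.
have hb := CC_bound _ iK.
have : i <= 2 * CC i.+1.
  case: i iK hb => [|i] iK hb; first lia.
  have := H1 i.+1; have := CC_mono (leqnSn i.+1). lia.
move=> h; rewrite L2 //; lia.
Qed.

Lemma nch u : u < 2 * n - 1 -> nchildren n par u = (b u).*2.
Proof.
move=> uK; rewrite /nchildren.
rewrite (eq_in_count (a2 := fun w => (w <= 2 * CC u.+1) && (2 * CC u < w))); last first.
  move=> w; rewrite mem_iota => /andP[w1 _] /=.
  case: u uK => [|u] uK.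
    by rewrite -leqn0 /par par_le // /CC /= w1 andbT.
  rewrite eqn_leq /par par_le // ltnNge par_le; last lia. by rewrite -ltnNge.
have hb := CC_bound _ uK.
rewrite L2; last by have := CC_mono (leqnSn u); lia.
rewrite CC_S in hb *; case: (b u) hb => /=; lia.
Qed.

Theorem gen : is_FH_ranked_tree_shape n par.
Proof.
split => //.
- move=> v /andP[v0 vK]; rewrite /par; case: v v0 vK => // v _ vK; rewrite ltnS par_le; last lia.
  apply: H1; lia.
- move=> u uK; rewrite nch //; case: (b u); auto.
- rewrite (eq_in_count (a2 := predC b)); last first.
    by move=> u; rewrite mem_iota /= => h; rewrite nch //; case: (b u).
  have := count_predC b (iota 0 (2 * n - 1)); rewrite size_iota -/(CC _) H3 => e; apply/eqP; rewrite -(eqn_add2l n.-1) e; apply/eqP; lia.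
Qed.
End Gen.

Lemma L1 a s M : count (fun w => w <= a) (iota s M) = minn (a.+1 - s) M.
Proof. elim: M s => [|M IH] s /=; first lia. rewrite IH; lia. Qed.

Theorem corollary1 (n N : nat) (f : nat -> nat) :
  N + 3 <= 2 * n ->
  (forall i, i <= N -> 0 < f i) ->
  f 0 = 2 ->
  (forall i, 1 <= i <= N -> f i = f i.-1 + 1 \/ f i + 1 = f i.-1) ->
  (forall i, i <= N -> f i + i + 2 <= 2 * n) ->
  exists par : nat -> nat,
    is_FH_ranked_tree_shape n par /\
    (forall i, i <= N -> Fmat n par i i = f i).
Proof.
move=> hN fpos f0 fstep fle.
pose b0 := fun u => (u == 0) || (f u == f u.-1 + 1).
have A : forall i, i <= N -> 2 * count b0 (iota 0 i.+1) = f i + i.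
  elim=> [|i IH] hi; first by rewrite /= f0.
  rewrite -[i.+2]addn1 (iotaD 0 i.+1 1) count_cat /= addn0 add0n mulnDr IH; last lia.
  rewrite /b0 /=; case: eqP => /= h; have /= := fstep i.+1; lia.
set k := count b0 (iota 0 N.+1).
have Ak : 2 * k = f N + N by apply: A.
have fN := fpos N (leqnn N). have fNle := fle N (leqnn N).
pose L := n.-1 - k.
pose b := fun u => if u <= N then b0 u else u <= N + L.
have Clo : forall m, m <= N.+1 -> CC b m = count b0 (iota 0 m).
  move=> m hm; apply: eq_in_count => u; rewrite mem_iota /= /b => hu.
  by have -> : u <= N by lia.
have Chi : forall j, CC b (N.+1 + j) = k + minn j L.
  move=> j; rewrite /CC iotaD count_cat -/(CC b _) Clo // add0n; congr (_ + _).
  rewrite (eq_in_count (a2 := fun u => u <= N + L)); last first.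
    move=> u; rewrite mem_iota /= /b => hu.
    by have -> : (u <= N) = false by lia.
  rewrite L1; lia.
have H1 : forall w, 1 <= w <= 2 * n - 2 -> w <= 2 * CC b w.
  move=> w hw; case: (leqP w N.+1) => hwN.
    case: w hw hwN => [|i] hw hwN; first lia.
    rewrite Clo // A; last lia.
    have := fpos i; lia.
  have -> : w = N.+1 + (w - N.+1) by lia.
  rewrite Chi; lia.
have H3 : CC b (2 * n - 1) = n.-1.
  have -> : 2 * n - 1 = N.+1 + (2 * n - 2 - N) by lia.
  rewrite Chi; lia.
exists (par b n); split; first by apply: gen => //; lia.
move=> i hi; rewrite Fmat_par //; try lia.
rewrite Clo; last lia. rewrite A //; lia.
Qed.
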